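(* Let $\mathcal{A}$ be an abelian category. (1) Let $M,N_1,\dots,N_n$ be objects of $\mathcal{A}$. Then $\bigoplus_{i=1}^n N_i$ is strongly $M$-Rickart if and only if $N_i$ is strongly $M$-Rickart for every $i\in\{1,\dots,n\}$. (2) Let $M_1,\dots,M_n,N$ be objects of $\mathcal{A}$. Then $N$ is dual strongly $\bigoplus_{i=1}^n M_i$-Rickart if and only if $N$ is dual strongly $M_i$-Rickart for every $i\in\{1,\dots,n\}$.
   Context: A morphism $f:X\to Y$ is a section if $f'f=1_X$ for some $f'$, a retraction if $ff'=1_Y$ for some $f'$. A monomorphism $k:K\to X$ is fully invariant if for every $h:X\to X$ there is $\alpha:K\to K$ with $hk=k\alpha$; an epimorphism $c:X\to C$ is fully coinvariant if for every $h:X\to X$ there is $\gamma:C\to C$ with $ch=\gamma c$. For objects $M,N$: $N$ is strongly $M$-Rickart if the kernel of every morphism $f:M\to N$ is a fully invariant section; $N$ is dual strongly $M$-Rickart if the cokernel of every morphism $f:M\to N$ is a fully coinvariant retraction. *)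

(* Defs.v *)
From HB Require Import structures.
From mathcomp Require Import all_boot all_algebra.
Set Implicit Arguments. Unset Strict Implicit. Unset Printing Implicit Defensive.
Import GRing.Theory.
Local Open Scope ring_scope.

Record preAddCat := PreAddCat {
  Obj : Type;
  Mor : Obj -> Obj -> zmodType;
  comp : forall X Y Z : Obj, Mor Y Z -> Mor X Y -> Mor X Z; (* comp g f = g ∘ f *)
  idm : forall X : Obj, Mor X X;
  compA : forall X Y Z W (h : Mor Z W) (g : Mor Y Z) (f : Mor X Y),
      comp h (comp g f) = comp (comp h g) f;
  comp1m : forall X Y (f : Mor X Y), comp (idm Y) f = f;
  compm1 : forall X Y (f : Mor X Y), comp f (idm X) = f;
  compDl : forall X Y Z (g1 g2 : Mor Y Z) (f : Mor X Y),
      comp (g1 + g2) f = comp g1 f + comp g2 f;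
  compDr : forall X Y Z (g : Mor Y Z) (f1 f2 : Mor X Y),
      comp g (f1 + f2) = comp g f1 + comp g f2
}.
Arguments Mor : clear implicits.
Arguments comp {p X Y Z}.
Arguments idm {p}.

Section Notions.
Variable C : preAddCat.
Local Notation Obj := (Obj C).
Local Notation Mor := (Mor C).

Definition mono (X Y : Obj) (f : Mor X Y) : Prop :=
  forall W (g h : Mor W X), comp f g = comp f h -> g = h.
Definition epi (X Y : Obj) (f : Mor X Y) : Prop :=
  forall W (g h : Mor Y W), comp g f = comp h f -> g = h.

Definition is_kernel (X Y K : Obj) (f : Mor X Y) (k : Mor K X) : Prop :=
  comp f k = 0 /\
  forall W (g : Mor W X), comp f g = 0 -> exists! u : Mor W K, comp k u = g.
Definition is_cokernel (X Y Q : Obj) (f : Mor X Y) (c : Mor Y Q) : Prop :=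
  comp c f = 0 /\
  forall W (g : Mor Y W), comp g f = 0 -> exists! u : Mor Q W, comp u c = g.

Definition is_zero_obj (Z : Obj) : Prop := idm Z = 0.

Definition is_biproduct (n : nat) (N : 'I_n -> Obj) (B : Obj)
    (inj : forall i, Mor (N i) B) (proj : forall i, Mor B (N i)) : Prop :=
  (forall i, comp (proj i) (inj i) = idm (N i)) /\
  (forall i j, i != j -> comp (proj i) (inj j) = 0) /\
  \sum_(i < n) comp (inj i) (proj i) = idm B.

Definition is_abelian : Prop :=
  (exists Z, is_zero_obj Z) /\
  (forall X1 X2 : Obj, exists (B : Obj) (i1 : Mor X1 B) (i2 : Mor X2 B)
        (p1 : Mor B X1) (p2 : Mor B X2),
      [/\ comp p1 i1 = idm X1, comp p2 i2 = idm X2, comp p1 i2 = 0,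
          comp p2 i1 = 0 & comp i1 p1 + comp i2 p2 = idm B]) /\
  (forall X Y (f : Mor X Y), exists K (k : Mor K X), is_kernel f k) /\
  (forall X Y (f : Mor X Y), exists Q (c : Mor Y Q), is_cokernel f c) /\
  (forall K X (k : Mor K X), mono k -> exists Y (f : Mor X Y), is_kernel f k) /\
  (forall Y Q (c : Mor Y Q), epi c -> exists X (f : Mor X Y), is_cokernel f c).

Definition section (X Y : Obj) (f : Mor X Y) : Prop :=
  exists f' : Mor Y X, comp f' f = idm X.
Definition retraction (X Y : Obj) (f : Mor X Y) : Prop :=
  exists f' : Mor Y X, comp f f' = idm Y.

Definition fully_invariant (K X : Obj) (k : Mor K X) : Prop :=
  mono k /\ forall h : Mor X X, exists a : Mor K K, comp h k = comp k a.
Definition fully_coinvariant (X Q : Obj) (c : Mor X Q) : Prop :=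
  epi c /\ forall h : Mor X X, exists g : Mor Q Q, comp c h = comp g c.

(* N is strongly M-Rickart: the kernel of every f : M -> N is a fully
   invariant section *)
Definition strongly_rickart (M N : Obj) : Prop :=
  forall (f : Mor M N) K (k : Mor K M), is_kernel f k ->
    fully_invariant k /\ section k.
(* N is dual strongly M-Rickart: the cokernel of every f : M -> N is a fully
   coinvariant retraction *)
Definition dual_strongly_rickart (M N : Obj) : Prop :=
  forall (f : Mor M N) Q (c : Mor N Q), is_cokernel f c ->
    fully_coinvariant c /\ retraction c.
End Notions.

(* Main.v *)
From Pilot Require Import Defs.
From mathcomp Require Import all_boot all_algebra.
Set Implicit Arguments. Unset Strict Implicit. Unset Printing Implicit Defensive.
Import GRing.Theory.
Local Open Scope ring_scope.
Local Notation comp := Pilot.Defs.comp.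

Section Gen.
Variable C : preAddCat.

Lemma cA (X Y Z W : Obj C) (h : Mor C Z W) (g : Mor C Y Z) (f : Mor C X Y) :
  comp h (comp g f) = comp (comp h g) f.
Proof. exact: Pilot.Defs.compA. Qed.

Lemma comp0l (X Y Z : Obj C) (f : Mor C X Y) : comp (0 : Mor C Y Z) f = 0.
Proof.
have := compDl (0 : Mor C Y Z) 0 f; rewrite addr0 => H.
by move/esym/eqP: H; rewrite -subr_eq0 addrK => /eqP.
Qed.

Lemma compr0 (X Y Z : Obj C) (g : Mor C Y Z) : comp g (0 : Mor C X Y) = 0.
Proof.
have := compDr g (0 : Mor C X Y) 0; rewrite addr0 => H.
by move/esym/eqP: H; rewrite -subr_eq0 addrK => /eqP.
Qed.

Lemma comp_suml (X Y Z : Obj C) n (g : 'I_n -> Mor C Y Z) (f : Mor C X Y) :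
  comp (\sum_(i < n) g i) f = \sum_(i < n) comp (g i) f.
Proof.
apply: (big_morph (fun g => comp g f)); [by move=> a b; rewrite compDl | exact: comp0l].
Qed.

Lemma kernel_mono (X Y K : Obj C) (f : Mor C X Y) (k : Mor C K X) :
  is_kernel f k -> mono k.
Proof.
move=> [fk0 Hk] W g h E.
have H0 : comp f (comp k g) = 0 by rewrite cA fk0 comp0l.
have [u [_ Hu]] := Hk W _ H0.
by rewrite -(Hu g erefl) (Hu h (esym E)).
Qed.

Lemma part1 (Hker : forall (X Y : Obj C) (f : Mor C X Y),
                exists K (k : Mor C K X), is_kernel f k)
  n (M : Obj C) (N : 'I_n -> Obj C) (B : Obj C)
  (inj : forall i, Mor C (N i) B) (proj : forall i, Mor C B (N i)) :
  @is_biproduct C n N B inj proj ->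
  (strongly_rickart M B <-> forall i, strongly_rickart M (N i)).
Proof.
move=> [Hpi [Hpij Hsum]]; split.
  move=> HB i f K k [fk0 Hk]; apply: (HB (comp (inj i) f)); split.
    by rewrite -cA fk0 compr0.
  move=> W g H; apply: Hk.
  by rewrite -[comp f g]comp1m -(Hpi i) -cA (cA (inj i)) H compr0.
move=> HN f K k kerk.
have kmono := kernel_mono kerk.
have [fk0 Hk] := kerk.
have zeroB : forall X (f' : Mor C X B), (forall j, comp (proj j) f' = 0) -> f' = 0.
  move=> X f' H; rewrite -[f']comp1m -Hsum comp_suml big1 // => j _.
  by rewrite -cA H compr0.
split; first split => //.
  move=> h; suff [a [Ea _]] : exists! a, comp k a = comp h k by exists a.
  apply: Hk; apply: zeroB => j.
  have [Kj [kj kerj]] := Hker _ _ (comp (proj j) f).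
  have [[_ inv] _] := HN j _ _ _ kerj.
  have [fkj0 Hkj] := kerj.
  have [u [Eu _]] : exists! u, comp kj u = k by apply: Hkj; rewrite -cA fk0 compr0.
  have [a Ea] := inv h.
  by rewrite -Eu (cA h) Ea -(cA kj) (cA f) (cA (proj j)) (cA (proj j) f kj) fkj0 comp0l.
suff claim : forall m, (m <= n)%N -> exists P : Mor C M M,
    (forall j : 'I_n, (j < m)%N -> comp (comp (proj j) f) P = 0) /\
    (forall W (g : Mor C W M), comp f g = 0 -> comp P g = g).
  have [P [HP1 HP2]] := claim n (leqnn n).
  have [u [Eu _]] : exists! u, comp k u = P.
    by apply: Hk; apply: zeroB => j; rewrite cA; exact: HP1 (ltn_ord j).
  exists u; apply: kmono; rewrite cA Eu compm1; exact: HP2.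
elim=> [|m IH] lemn.
  by exists (idm M); split => // W g _; rewrite comp1m.
have [P [HP1 HP2]] := IH (ltnW lemn).
pose j0 := Ordinal lemn.
have [K0 [k0 ker0]] := Hker _ _ (comp (proj j0) f).
have [[_ inv0] [r0 hr0]] := HN j0 _ _ _ ker0.
have [fk00 Hk0] := ker0.
have key : forall h : Mor C M M, comp h (comp k0 r0) = comp (comp k0 r0) (comp h (comp k0 r0)).
  move=> h; have [a Ea] := inv0 h.
  by rewrite cA Ea -!cA (cA r0) hr0 comp1m.
exists (comp P (comp k0 r0)); split.
  move=> j; rewrite ltnS leq_eqVlt => /orP [/eqP ej|ltj].
    have -> : j = j0 by apply: val_inj.
    by rewrite key cA cA (cA (comp (proj j0) f) k0 r0) fk00 !comp0l.
  by rewrite cA HP1 // comp0l.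
move=> W g H.
have [u [Eu _]] : exists! u, comp k0 u = g by apply: Hk0; rewrite -cA H compr0.
by rewrite -cA -Eu -(cA k0) (cA r0) hr0 comp1m HP2 // Eu.
Qed.

End Gen.

Definition opC (C : preAddCat) : preAddCat :=
  @PreAddCat (Obj C) (fun X Y => Mor C Y X) (fun X Y Z g f => comp f g)
    (fun X => idm X) (fun X Y Z W h g f => esym (Pilot.Defs.compA f g h))
    (fun X Y f => compm1 f) (fun X Y f => comp1m f)
    (fun X Y Z g1 g2 f => compDr f g1 g2) (fun X Y Z g f1 f2 => compDl f1 f2 g).

Theorem theorem3p1 (C : preAddCat) (HC : is_abelian C) :
  (forall (n : nat) (M : Obj C) (N : 'I_n -> Obj C) (B : Obj C)
          (inj : forall i, Mor C (N i) B) (proj : forall i, Mor C B (N i)),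
      @is_biproduct C n N B inj proj ->
      (strongly_rickart M B <-> forall i, strongly_rickart M (N i))) /\
  (forall (n : nat) (M : 'I_n -> Obj C) (N : Obj C) (B : Obj C)
          (inj : forall i, Mor C (M i) B) (proj : forall i, Mor C B (M i)),
      @is_biproduct C n M B inj proj ->
      (dual_strongly_rickart B N <-> forall i, dual_strongly_rickart (M i) N)).
Proof.
have [_ [_ [Hker [Hcok _]]]] := HC.
split.
  move=> n M N B inj proj Hb; exact: (@part1 C Hker n M N B inj proj Hb).
move=> n M N B inj proj Hb.
have Hker' : forall (X Y : Obj (opC C)) (f : Mor (opC C) X Y),
    exists K (k : Mor (opC C) K X), is_kernel f k.
  move=> X Y f; exact: Hcok.
have Hb' : @is_biproduct (opC C) n M B proj inj.
  have [H1 [H2 H3]] := Hb; split => //; split => // i j ij.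
  by apply: H2; rewrite eq_sym.
exact: (@part1 (opC C) Hker' n N M B proj inj Hb').
Qed.
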